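(* Let $X$ be a compact metric space, $f:X\to X$ continuous, $x\in X$, and suppose $L=\omega_f(x)$ is totally periodic. Let $Y=\overline{O_f(x)}=O_f(x)\cup L$, for $z\in Y$ let $[z]$ be the connected component of $Y$ containing $z$, let $Y/\mathcal{C}$ be the quotient space obtained by collapsing each connected component of $Y$ to a point, $\pi:Y\to Y/\mathcal{C}$, $\pi(y)=[y]$, the quotient map, and $\tilde f:Y/\mathcal{C}\to Y/\mathcal{C}$, $\tilde f([y])=[f(y)]$, the induced (well-defined, continuous) map. Then: (1) for every $n\in\mathbb{Z}_+$, $[f^n(x)]=\{f^n(x)\}$ and $[f^n(x)]$ is an isolated point of $Y/\mathcal{C}$; (2) if $y\in L$ then $[y]\subset L$; (3) for every $y\in Y$, $f([y])=[f(y)]$, and $f^n([y])=[f^n(y)]$ for all $n\in\mathbb{Z}_+$; (4) for every $z\in L$, $[z]$ is a periodic point of $\tilde f$; (5) if $L$ is infinite, then $\{[y]:\ y\in L\}=\omega_{\tilde f}([x])$.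
   Context: $O_f(x)=\{f^n(x):n\in\mathbb{Z}_+\}$ is the orbit of $x$. $\omega_f(x)=\{y:\ \exists\, n_i\to+\infty,\ f^{n_i}(x)\to y\}$, and it is totally periodic if each of its points $y$ satisfies $f^m(y)=y$ for some $m\ge1$. *)

(* Defs.v *)
From HB Require Import structures.
From mathcomp Require Import all_boot all_order all_algebra.
From mathcomp Require Import all_classical all_reals all_analysis.
Set Implicit Arguments. Unset Strict Implicit. Unset Printing Implicit Defensive.
Import Order.TTheory GRing.Theory Num.Theory.
Local Open Scope classical_set_scope.

Definition orbit_of {T : Type} (f : T -> T) (x : T) : set T :=
  [set iter n f x | n in [set: nat]].

Definition nat_to_infty (n : nat -> nat) : Prop :=
  forall N : nat, \forall i \near \oo, (N <= n i)%N.

Definition omega_lim {T : topologicalType} (f : T -> T) (x : T) : set T :=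
  [set y | exists n : nat -> nat,
     nat_to_infty n /\ (fun i => iter (n i) f x) @ \oo --> y].

Definition totally_periodic {T : Type} (f : T -> T) (L : set T) : Prop :=
  forall y, L y -> exists m : nat, (0 < m)%N /\ iter m f y = y.

Definition relopen {T : topologicalType} (Y A : set T) : Prop :=
  exists V : set T, open V /\ A = V `&` Y.

(* Y/C : points are the connected components of Y *)
Definition comp_space {T : topologicalType} (Y : set T) : set (set T) :=
  [set connected_component Y y | y in Y].

(* quotient topology on Y/C: U is open iff the union of its members
   (its preimage under pi) is open in Y *)
Definition qopen {T : topologicalType} (Y : set T) (U : set (set T)) : Prop :=
  U `<=` comp_space Y /\ relopen Y (\bigcup_(C in U) C).

(* the induced map f~([y]) = [f y]; on a component C = [y] the union below
   equals [f y] (well-definedness) *)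
Definition ftilde {T : topologicalType} (Y : set T) (f : T -> T)
  (C : set T) : set T :=
  \bigcup_(y in C) connected_component Y (f y).

Definition qconverges {T : topologicalType} (Y : set T)
  (u : nat -> set T) (C : set T) : Prop :=
  forall U, qopen Y U -> U C -> \forall i \near \oo, U (u i).

Definition q_omega_lim {T : topologicalType} (Y : set T)
  (g : set T -> set T) (c : set T) : set (set T) :=
  [set C | comp_space Y C /\ exists n : nat -> nat,
     nat_to_infty n /\ qconverges Y (fun i => iter (n i) g c) C].

(* Main.v *)
Require Import Defs.
From HB Require Import structures.
From mathcomp Require Import all_boot all_order all_algebra.
From mathcomp Require Import all_classical all_reals all_analysis.
Import Order.TTheory GRing.Theory Num.Theory.
Local Open Scope classical_set_scope.
Local Open Scope ring_scope.
From mathcomp Require Import zify.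

Section S.
Variables (R : realType) (X : metricType R) (f : X -> X) (x : X).

Local Notation d := (@mdist R X).

Lemma acc_L (z : X) :
  (forall N (e : R), 0 < e -> exists k, (N <= k)%N /\ d z (iter k f x) < e) ->
  omega_lim f x z.
Proof.
move=> H.
have /choice [n Hn] : forall i : nat, exists k, (i <= k)%N /\ d z (iter k f x) < i.+1%:R^-1.
  by move=> i; apply: H; rewrite invr_gt0 ltr0n.
exists n; split.
  move=> N; near=> i; apply: leq_trans (Hn i).1; near: i; exact: nbhs_infty_ge.
apply/cvg_ballP => e e0; near=> i; rewrite ballEmdist /=.
apply: lt_trans (Hn i).2 _; near: i.
exact: (near_infty_natSinv_lt (PosNum e0)).
Unshelve. all: by end_near.
Qed.

Lemma B_L (z : X) :
  (forall e : R, 0 < e -> exists k, iter k f x != z /\ d z (iter k f x) < e) ->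
  omega_lim f x z.
Proof.
move=> H; apply: acc_L.
suff H2 : forall N (e : R), 0 < e -> exists k, [/\ (N <= k)%N, iter k f x != z & d z (iter k f x) < e].
  by move=> N e e0; have [k [? ? ?]] := H2 N e e0; exists k.
elim=> [|N IH] e e0.
  by have [k [? ?]] := H e e0; exists k.
case: (eqVneq (iter N f x) z) => [EN|NE].
  have [k [Nk kz dk]] := IH e e0; exists k; split => //.
  rewrite ltn_neqAle Nk andbT; apply/eqP => Nk'.
  by move: kz; rewrite -Nk' EN eqxx.
have dpos : 0 < d z (iter N f x) by rewrite mdist_gt0 eq_sym.
have mpos : 0 < Order.min e (d z (iter N f x)) by rewrite lt_min e0 dpos.
have [k [Nk kz dk]] := IH _ mpos.
exists k; split => //; last by apply: lt_le_trans dk _; rewrite ge_min lexx.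
rewrite ltn_neqAle Nk andbT; apply/eqP => Nk'.
by move: dk; rewrite -Nk' lt_min ltxx andbF.
Qed.


Lemma C_L (K : nat) (p : X) : exists2 e : R, 0 < e &
  forall j, (j < K)%N -> iter j f x != p -> e <= d p (iter j f x).
Proof.
elim: K => [|K [e e0 He]]; first by exists 1 => // j.
case: (eqVneq (iter K f x) p) => [EK|NK].
  exists e => // j; rewrite ltnS leq_eqVlt => /orP[/eqP ->|jK]; last exact: He.
  by rewrite EK eqxx.
have dpos : 0 < d p (iter K f x) by rewrite mdist_gt0 eq_sym.
exists (Order.min e (d p (iter K f x))); first by rewrite lt_min e0 dpos.
move=> j; rewrite ltnS leq_eqVlt => /orP[/eqP ->|jK] jp; first by rewrite ge_min lexx orbT.
by rewrite ge_min He.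
Qed.

Lemma evper a b : (a < b)%N -> iter a f x = iter b f x ->
  forall k, exists2 j, (j < b)%N & iter k f x = iter j f x.
Proof.
move=> ab Eab; elim/ltn_ind => k IH.
case: (ltnP k b) => kb; first by exists k.
have -> : iter k f x = iter (k - b + a) f x.
  by rewrite iterD Eab -iterD subnK.
apply: IH; lia.
Qed.

Lemma iter_mul (u : X) m j : iter m f u = u -> iter (j * m) f u = u.
Proof. by move=> Hm; elim: j => // j IH; rewrite mulSn iterD IH Hm. Qed.


Lemma Lper (TP : totally_periodic f (omega_lim f x)) n :
  omega_lim f x (iter n f x) -> exists2 b, (n < b)%N & iter n f x = iter b f x.
Proof.
move=> /TP [m [m0 Hm]]; exists (m + n)%N; first by lia.
by rewrite iterD Hm.
Qed.

Lemma iso (TP : totally_periodic f (omega_lim f x)) n : exists2 e : R, 0 < e &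
  forall k, iter k f x != iter n f x -> e <= d (iter n f x) (iter k f x).
Proof.
case: (pselect (omega_lim f x (iter n f x))) => Lp.
  have [b nb Eb] := Lper TP n Lp.
  have [e e0 He] := C_L b (iter n f x).
  exists e => // k; have [j jb ->] := evper n b nb Eb k; exact: He.
apply: contrapT => Hn; apply: Lp; apply: B_L => e e0.
apply: contrapT => Hk; apply: Hn; exists e => // k hk.
rewrite leNgt; apply/negP => hlt; apply: Hk; exists k; split => //.
Qed.

Lemma orbY n : closure (orbit_of f x) (iter n f x).
Proof. by apply: subset_closure; exists n. Qed.

Lemma relopen_pt (TP : totally_periodic f (omega_lim f x)) n :
  relopen (closure (orbit_of f x)) [set iter n f x].
Proof.
set p := iter n f x.
have [e e0 He] := iso TP n.
exists (ball p e)°; split; first exact: open_interior.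
apply/seteqP; split.
  move=> q ->; split; last exact: orbY.
  by apply: nbhs_singleton; apply: nbhs_interior; exact: nbhsx_ballx.
move=> q [/interior_subset Bq Yq]; apply: contrapT => /eqP qp.
move: Bq; rewrite ballEmdist /= => Bq.
have dpos : 0 < d p q by rewrite mdist_gt0 eq_sym.
have mpos : 0 < Order.min (e - d p q) (d p q) by rewrite lt_min subr_gt0 Bq dpos.
have [_ [[k _ <-]]] := Yq _ (nbhsx_ballx q _ mpos).
rewrite ballEmdist /= lt_min => /andP[h1 h2].
have kp : iter k f x != p.
  apply/eqP => E; move: h2; rewrite E metric_sym ltxx //.
have := He k kp; rewrite leNgt => /negP; apply.
apply: le_lt_trans (metric_triangle p q (iter k f x)) _.
by rewrite -ltrBrDl.
Qed.


Lemma comp_iso (Y : set X) p : relopen Y [set p] -> Y p ->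
  connected_component Y p = [set p].
Proof.
move=> [V [oV EV]] Yp.
have cC := @component_connected X Y p.
symmetry; apply: cC.
- by exists p.
- exists V => //; apply/seteqP; split.
    move=> q ->; split; first exact: connected_component_refl.
    by have : [set p] p by []; rewrite EV => -[].
  move=> q [/connected_component_sub Yq Vq].
  by have : (V `&` Y) q by []; rewrite -EV.
- exists [set p]; first exact/accessible_closed_set1/hausdorff_accessible/metric_hausdorff.
  apply/seteqP; split; last by move=> q [].
  by move=> q ->; split => //; exact: connected_component_refl.
Qed.

Lemma YmL z : closure (orbit_of f x) z -> ~ orbit_of f x z -> omega_lim f x z.
Proof.
move=> Yz nO; apply: B_L => e e0.
have [_ [[k _ <-]]] := Yz _ (nbhsx_ballx z _ e0).
rewrite ballEmdist /= => h; exists k; split => //.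
by apply/eqP => E; apply: nO; exists k.
Qed.

Lemma LY z : omega_lim f x z -> closure (orbit_of f x) z.
Proof.
move=> [n [_ Hn]] B HB.
have [i Hi] := @filter_ex nat \oo _ (fun i => B (iter (n i) f x)) (Hn B HB).
by exists (iter (n i) f x); split => //; exists (n i).
Qed.

Hypothesis Hf : continuous f.

Lemma fY z : closure (orbit_of f x) z -> closure (orbit_of f x) (f z).
Proof.
move=> Yz B HB.
have [_ [[k _ <-]] HB'] := Yz _ (Hf z B HB).
by exists (iter k.+1 f x); split => //; exists k.+1.
Qed.

Lemma fL z : omega_lim f x z -> omega_lim f x (f z).
Proof.
move=> [n [ninf Hn]]; exists (fun i => (n i).+1); split.
  move=> N; apply: filterS (ninf N) => i /= h; exact: leqW.
have -> : (fun i => iter (n i).+1 f x) = f \o (fun i => iter (n i) f x) by [].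
exact: cvg_comp Hn (Hf z).
Qed.


Local Notation Y := (closure (orbit_of f x)).
Local Notation comp := (connected_component Y).
Local Notation L := (omega_lim f x).

Lemma fcomp z : Y z -> f @` comp z `<=` comp (f z).
Proof.
move=> Yz; apply: connected_component_max.
- by exists z => //; exact: connected_component_refl.
- by move=> _ [u /connected_component_sub Yu <-]; exact: fY.
- apply: connected_continuous_connected; first exact: component_connected.
  exact: continuous_subspaceT.
Qed.

Lemma compP {a b} : comp a b -> comp b = comp a.
Proof. by move=> h; rewrite (same_connected_component h). Qed.

Lemma iterY j a : Y a -> Y (iter j f a).
Proof. by move=> Ya; elim: j => // j IH; exact: fY. Qed.

Lemma itercomp j a u : Y a -> comp a u -> comp (iter j f a) (iter j f u).
Proof.
move=> Ya cu; elim: j => // j IH /=.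
exact: (fcomp _ (iterY j a Ya) _ (imageP f IH)).
Qed.

Lemma comp_orb (TP : totally_periodic f L) n : comp (iter n f x) = [set iter n f x].
Proof. exact: comp_iso (relopen_pt TP n) (orbY n). Qed.

Lemma Lcomp (TP : totally_periodic f L) y : L y -> comp y `<=` L.
Proof.
move=> Ly w cw.
have Yw := connected_component_sub cw.
case: (pselect (orbit_of f x w)) => [[k _ Ek]|nO]; last exact: YmL.
have cy : comp y y by apply: connected_component_refl; exact: LY.
move: cy; rewrite -(compP cw) -Ek comp_orb // => Ey.
by rewrite -Ey.
Qed.


Lemma fcompE (TP : totally_periodic f L) y : Y y -> f @` comp y = comp (f y).
Proof.
move=> Yy; apply/seteqP; split; first exact: fcomp.
move=> z cz.
case: (pselect (orbit_of f x (f y))) => [[k _ Ek]|nO].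
  move: cz; rewrite -Ek comp_orb // Ek => ->.
  by exists y => //; exact: connected_component_refl.
have Ly : L y.
  apply: YmL => // -[k _ Ek]; apply: nO; exists k.+1 => //=; by rewrite Ek.
have Lfy := fL _ Ly.
have Lz : L z := Lcomp TP _ Lfy _ cz.
have [m [m0 Hm]] := TP _ Ly.
have [k [k0 Hk]] := TP _ Lz.
have km0 : (0 < k * m)%N by rewrite muln_gt0 k0 m0.
exists (iter (k * m).-1 f z).
  have := itercomp (k * m).-1 _ _ (fY _ Yy) cz.
  by rewrite -iterSr prednK // iter_mul.
have -> : f (iter (k * m).-1 f z) = iter (k * m) f z by rewrite -[in RHS](prednK km0).
by rewrite mulnC iter_mul.
Qed.

Lemma itercompE (TP : totally_periodic f L) y n : Y y ->
  iter n f @` comp y = comp (iter n f y).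
Proof.
move=> Yy; elim: n => [|n IH].
  apply/seteqP; split; first by move=> _ [u cu <-].
  by move=> u cu; exists u.
apply/seteqP; split.
  by move=> _ [u cu <-]; exact: itercomp.
move=> z; rewrite /= -(fcompE TP _ (iterY n y Yy)) => -[w]; rewrite -IH => -[u cu <-] <-.
by exists u.
Qed.

Lemma ftE z : Y z -> ftilde Y f (comp z) = comp (f z).
Proof.
move=> Yz; apply/seteqP; split.
  move=> w [u cu cw]; rewrite -(compP (fcomp _ Yz _ (imageP f cu))).
  exact: cw.
by move=> w cw; exists z => //; exact: connected_component_refl.
Qed.

Lemma iterftE z m : Y z -> iter m (ftilde Y f) (comp z) = comp (iter m f z).
Proof.
move=> Yz; elim: m => // m IH /=; rewrite IH ftE //; exact: iterY.
Qed.


Lemma Lfin a b : (a < b)%N -> iter a f x = iter b f x -> finite_set L.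
Proof.
move=> ab Eab.
apply: (sub_finite_set _ (finite_image (fun j => iter j f x) (finite_II b))).
move=> z Lz; apply: contrapT => nz.
have [e e0 He] := C_L b z.
have [n [_ Hn]] := Lz.
have [i Hi] := @filter_ex nat \oo _ (fun i => ball z e (iter (n i) f x))
  (Hn _ (nbhsx_ballx z e e0)).
have [j jb Ej] := evper a b ab Eab (n i).
move: Hi; rewrite Ej ballEmdist /= => Hi.
have jz : iter j f x != z by apply/eqP => E; apply: nz; exists j.
by have := He j jb jz; rewrite leNgt Hi.
Qed.

Lemma qopen_pt (TP : totally_periodic f L) k : qopen Y [set comp (iter k f x)].
Proof.
split; first by move=> C ->; exists (iter k f x) => //; exact: orbY.
rewrite bigcup_set1 comp_orb //; exact: relopen_pt.
Qed.

End S.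

Theorem lemma2p7 (R : realType) (X : metricType R) (f : X -> X) (x : X) :
  compact [set: X] -> continuous f ->
  let L := omega_lim f x in
  totally_periodic f L ->
  let Y := closure (orbit_of f x) in
  let comp := connected_component Y in
  let ft := ftilde Y f in
  (* (1) *)
  (forall n : nat, comp (iter n f x) = [set iter n f x] /\
                   qopen Y [set comp (iter n f x)]) /\
  (* (2) *)
  (forall y, L y -> comp y `<=` L) /\
  (* (3) *)
  (forall y, Y y -> f @` comp y = comp (f y) /\
     forall n : nat, iter n f @` comp y = comp (iter n f y)) /\
  (* (4) *)
  (forall z, L z -> exists m : nat, (0 < m)%N /\ iter m ft (comp z) = comp z) /\
  (* (5) *)
  (~ finite_set L -> [set comp y | y in L] = q_omega_lim Y ft (comp x)).
Proof.
move=> _ Hf; cbv zeta; move=> TP.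
have Yx : closure (orbit_of f x) x := @orbY _ _ f x 0.
split.
  by move=> n; split; [exact: comp_orb | exact: qopen_pt].
split.
  by move=> y Ly; exact: Lcomp.
split.
  by move=> y Yy; split; [exact: fcompE | move=> n; exact: itercompE].
split.
  move=> z Lz; have [m [m0 Hm]] := TP z Lz; exists m; split => //.
  by rewrite iterftE ?Hm //; exact: LY.
move=> Linf; apply/seteqP; split.
  move=> _ [y Ly <-]; split; first by exists y => //; exact: LY.
  have [n [ninf Hn]] := Ly; exists n; split => //.
  move=> U [Usub [V [oV EV]]] UC.
  have yV : V y.
    have : (\bigcup_(C in U) C) y.
      by exists (connected_component (closure (orbit_of f x)) y) => //;
        apply: connected_component_refl; exact: LY.
    by rewrite EV => -[].
  have HV : \forall i \near \oo, V (iter (n i) f x) := Hn V (open_nbhs_nbhs (conj oV yV)).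
  apply: filterS HV => i /= Vi.
  rewrite iterftE //.
  have : (\bigcup_(C in U) C) (iter (n i) f x) by rewrite EV; split => //; exact: orbY.
  case=> C UC2 Cp; have [c Yc Ec] := Usub C UC2.
  by rewrite -Ec in Cp; rewrite (@compP _ _ f x _ _ Cp) Ec.
move=> C [[c Yc <-] [n [ninf Hq]]].
case: (pselect (omega_lim f x c)) => [Lc|nLc]; first by exists c.
exfalso; apply: Linf.
have [k _ Ek] : orbit_of f x c.
  by apply: contrapT => nO; apply: nLc; exact: YmL.
subst c.
have [i [Hi1 Hi2]] := @filter_ex nat \oo _ _ (filterI (Hq _ (@qopen_pt _ _ f x TP k) erefl) (ninf k.+1)).
move: Hi1; rewrite /= iterftE //.
rewrite !comp_orb // => Hi1.
have : [set iter k f x] (iter (n i) f x) by rewrite -Hi1.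
move=> E; exact: (@Lfin _ _ f x k (n i) Hi2 (esym E)).
Qed.
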